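(* For every integer $t\ge 1$ and every integer $r\ge 3$, $\mathrm{ex}(n,K_r,F_t)=O(n)$ as $n\to\infty$.
   Context: For graphs $H$ and $F$, $\mathrm{ex}(n,H,F)$ is the maximum number of (not necessarily induced) copies of $H$ in an $n$-vertex graph containing no subgraph isomorphic to $F$. The $t$-fan $F_t$ has vertices $u,v_1,\dots,v_t,w_1,\dots,w_t$ and edges $uv_i,uw_i,v_iw_i$ for $1\le i\le t$ ($t$ triangles sharing one vertex). $K_r$ is the complete graph on $r$ vertices. *)

(* Defs.v *)
From mathcomp Require Import all_boot.
Set Implicit Arguments. Unset Strict Implicit. Unset Printing Implicit Defensive.

Definition simple_graph (T : finType) (e : rel T) : Prop :=
  symmetric e /\ irreflexive e.

(* Vertex type of the t-fan F_t: None = centre u,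
   Some (i, false) = v_i, Some (i, true) = w_i. *)
Definition fan_vertex (t : nat) : finType := option ('I_t * bool).

(* Edges of F_t: u v_i, u w_i, v_i w_i. *)
Definition fan_edge (t : nat) : rel (fan_vertex t) :=
  fun x y =>
    match x, y with
    | None, Some _ => true
    | Some _, None => true
    | Some (i, b), Some (j, c) => (i == j) && (b != c)
    | None, None => false
    end.

Definition contains_fan (T : finType) (e : rel T) (t : nat) : Prop :=
  exists f : fan_vertex t -> T,
    injective f /\ forall x y, fan_edge x y -> e (f x) (f y).

Definition is_clique (T : finType) (e : rel T) (S : {set T}) : bool :=
  [forall x in S, forall y in S, (x != y) ==> e x y].

(* Number of (not necessarily induced) copies of K_r in G:
   a copy of K_r is determined by its r-element vertex set, which must be a clique. *)
Definition num_Kr (T : finType) (e : rel T) (r : nat) : nat :=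
  #|[set S : {set T} | (#|S| == r) && is_clique e S]|.

(* Main.v *)
Require Import Defs.
From mathcomp Require Import all_boot zify.
Set Implicit Arguments. Unset Strict Implicit. Unset Printing Implicit Defensive.

Fixpoint ends (T : Type) (s : seq (T * T)) : seq T :=
  match s with [::] => [::] | p :: s' => p.1 :: p.2 :: ends s' end.

Definition lmatch (T : finType) (e : rel T) (x : T) (s : seq (T * T)) : bool :=
  all (fun p => [&& e x p.1, e x p.2 & e p.1 p.2]) s && uniq (ends s).

Lemma size_ends (T : Type) (s : seq (T * T)) : size (ends s) = (size s).*2.
Proof. by elim: s => //= p s ->; rewrite doubleS. Qed.

Lemma nth_ends (T : Type) (x0 : T) (s : seq (T * T)) i (b : bool) :
  i < size s -> nth x0 (ends s) (i.*2 + b) =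
     if b then (nth (x0, x0) s i).2 else (nth (x0, x0) s i).1.
Proof.
elim: s i => [|p s IH] [|i] //= Hi.
  by clear IH; case: b.
idtac.
exact: IH.
Qed.

Lemma ends_nbr (T : finType) (e : rel T) x s y :
  lmatch e x s -> y \in ends s -> e x y.
Proof.
rewrite /lmatch => /andP [Ha _]; elim: s Ha => [|p s IH] //= /andP [/and3P [H1 H2 _] Ha].
by rewrite !inE => /orP [/eqP -> //| /orP [/eqP -> //| ]]; apply: IH.
Qed.

Lemma ext_step (T : finType) (e : rel T) x s y z :
  irreflexive e -> lmatch e x s -> e x y -> e x z -> e y z ->
  y \notin ends s -> z \notin ends s ->
  lmatch e x ((y, z) :: s) /\ (size (ends s)).+2 <= #|T|.
Proof.
move=> irr Hs Hxy Hxz Hyz Hy Hz.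
have Hs' : lmatch e x ((y, z) :: s).
  move: Hs; rewrite /lmatch /= Hxy Hxz Hyz /= => /andP [-> ->]; rewrite inE negb_or Hy Hz.
  have -> : y != z by apply/eqP => Eyz; move: Hyz; rewrite Eyz irr.
  done.
split=> //.
move: Hs' => /andP [_ /card_uniqP /= E]; rewrite -E; apply: max_card.
Qed.

Lemma cover_exists (T : finType) (e : rel T) x :
  irreflexive e ->
  exists s, lmatch e x s &&
    [forall y, forall z, (e x y && e x z && e y z) ==> (y \in ends s) || (z \in ends s)].
Proof.
move=> irr.
suff H : forall n s, lmatch e x s -> #|T| - size (ends s) <= n -> exists s, lmatch e x s &&
    [forall y, forall z, (e x y && e x z && e y z) ==> (y \in ends s) || (z \in ends s)].
  by apply: (H #|T| [::]) => //; rewrite subn0.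
elim=> [|n IH] s Hs Hn; case: (boolP [forall y, forall z, (e x y && e x z && e y z) ==> (y \in ends s) || (z \in ends s)]) => Hc;
  try by exists s; rewrite Hs Hc.
- move: Hc => /forallPn [y /forallPn [z]]; rewrite negb_imply negb_or => /andP [/andP [/andP [Hxy Hxz] Hyz] /andP [Hy Hz]].
  have [_ Hsz] := ext_step irr Hs Hxy Hxz Hyz Hy Hz.
  lia.
- move: Hc => /forallPn [y /forallPn [z]]; rewrite negb_imply negb_or => /andP [/andP [/andP [Hxy Hxz] Hyz] /andP [Hy Hz]].
  have [Hs' Hsz] := ext_step irr Hs Hxy Hxz Hyz Hy Hz.
  apply: (IH _ Hs'); have -> : size (ends ((y,z)::s)) = (size (ends s)).+2 by [].
  lia.
Qed.


Lemma fan_from_matching (T : finType) (e : rel T) x s t :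
  simple_graph e -> lmatch e x s -> t <= size s -> contains_fan e t.
Proof.
move=> [sym irr] Hs Hts.
pose f (v : fan_vertex t) : T :=
  match v with None => x | Some (i, b) => nth x (ends s) ((val i).*2 + b) end.
have Hlt : forall (i : 'I_t) (b : bool), (val i).*2 + b < size (ends s).
  move=> i b; rewrite size_ends; have := ltn_ord i; case: b => /=; lia.
have Hu : uniq (ends s) by move: Hs; rewrite /lmatch => /andP [].
have Hin : forall (i : 'I_t) (b : bool), nth x (ends s) ((val i).*2 + b) \in ends s.
  by move=> i b; apply: mem_nth; apply: Hlt.
have Hnx : forall (i : 'I_t) (b : bool), nth x (ends s) ((val i).*2 + b) != x.
  move=> i b; apply/eqP => E; have := ends_nbr Hs (Hin i b); rewrite E irr //.
exists f; split.
- move=> [[i b]|] [[j c]|] //=.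
  + move/eqP; rewrite nth_uniq ?Hlt // => /eqP E.
    have Eij : val i = val j by case: b c E => [] [] /=; lia.
    have Ebc : b = c by case: b c E => [] [] /=; lia.
    by rewrite Ebc (val_inj Eij).
  + by move=> E; move: (Hnx i b); rewrite E eqxx.
  + by move=> E; move: (Hnx j c); rewrite -E eqxx.
- move=> [[i b]|] [[j c]|] //=.
  + move=> /andP [/eqP Eij Hbc]; subst j.
    have Hi : val i < size s by exact: leq_trans (ltn_ord i) Hts.
    rewrite !nth_ends //.
    have /allP Ha : all (fun p => [&& e x p.1, e x p.2 & e p.1 p.2]) s by move: Hs; rewrite /lmatch => /andP [].
    have /and3P [_ _ He] := Ha _ (mem_nth (x, x) Hi).
    by case: b c Hbc => [] [] //= _; rewrite sym.
  + by move=> _; rewrite sym; apply: ends_nbr Hs (Hin i b).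
  + by move=> _; apply: ends_nbr Hs (Hin j c).
Qed.


Definition goodS (T : finType) (e : rel T) (t : nat) (a : T) (S : {set T}) : bool :=
  (#|S| <= (t.-1).*2) &&
  [forall y, forall z, (e a y && e a z && e y z) ==> (y \in S) || (z \in S)].

Lemma goodS_exists (T : finType) (e : rel T) t a :
  simple_graph e -> 1 <= t -> ~ contains_fan e t -> exists S, goodS e t a S.
Proof.
move=> Hg Ht Hf.
have [s /andP [Hs /forallP Hc]] := cover_exists a (proj2 Hg).
have Hsz : size s < t.
  by rewrite ltnNge; apply/negP => H; apply: Hf; apply: fan_from_matching Hg Hs H.
exists [set y in ends s]; apply/andP; split.
- rewrite cardsE; apply: leq_trans (card_size _) _; rewrite size_ends; lia.
- apply/forallP => y; apply/forallP => z; rewrite !inE.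
  by have /forallP := Hc y; apply.
Qed.

Definition Sf (T : finType) (e : rel T) (t : nat) (a : T) : {set T} :=
  odflt set0 [pick S | goodS e t a S].

Lemma Sf_good (T : finType) (e : rel T) t a :
  simple_graph e -> 1 <= t -> ~ contains_fan e t -> goodS e t a (Sf e t a).
Proof.
move=> Hg Ht Hf; rewrite /Sf; case: pickP => [S //| H].
have [S HS] := goodS_exists a Hg Ht Hf.
by rewrite H in HS.
Qed.

Lemma pick3 (T : finType) (Q : {set T}) a y :
  2 < #|Q| -> exists b, [/\ b \in Q, b != a & b != y].
Proof.
move=> HQ; case: (pickP [pred b | [&& b \in Q, b != a & b != y]]) => [b /and3P Hb | H].
  by exists b.
have : Q \subset [set a; y].
  apply/subsetP => z Hz; have := H z; rewrite /= Hz !inE.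
  by case: (z == a); case: (z == y).
move/subset_leq_card; rewrite cards2; case: (a != y) => /=; lia.
Qed.

Lemma combin (T : finType) (S : T -> {set T}) (Q : {set T}) :
  2 < #|Q| ->
  (forall a y z, a \in Q -> y \in Q -> z \in Q -> a != y -> a != z -> y != z ->
     (y \in S a) || (z \in S a)) ->
  exists a b, (b \in S a) && (Q \subset [set a; b] :|: S a :|: S b).
Proof.
move=> HQ F.
have [a0 Ha0] : exists a, a \in Q by apply/card_gt0P; lia.
case: (boolP [exists a in Q, Q \subset a |: S a]).
  move=> /exists_inP [a Ha Hsub].
  have [b [Hb Hba _]] := pick3 a a HQ.
  exists a, b; apply/andP; split.
    by move/subsetP: Hsub => /(_ b Hb); rewrite !inE (negbTE Hba).
  apply/subsetP => z Hz; move/subsetP: Hsub => /(_ z Hz); rewrite !inE.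
  by case/orP => ->; rewrite ?orbT.
move=> /exists_inPn HB.
have Hout : forall a, a \in Q -> exists y, [/\ y \in Q, y != a & y \notin S a].
  move=> a Ha; have /subsetPn [y Hy Hny] := HB a Ha.
  exists y; move: Hny; rewrite !inE negb_or => /andP [H1 H2]; by split.
have [y [Hy Hya HyS]] := Hout a0 Ha0.
have [b [Hb Hba Hby]] := pick3 a0 y HQ.
have ne : forall u v : T, u != v -> v != u by move=> u v; rewrite eq_sym.
have HbS : b \in S a0.
  have := F a0 y b Ha0 Hy Hb (ne _ _ Hya) (ne _ _ Hba) (ne _ _ Hby).
  by rewrite (negbTE HyS).
case: (boolP (y \in S b)) => Hyb.
  exists a0, b; rewrite HbS /=.
  apply/subsetP => z Hz; rewrite !inE.
  case: (eqVneq z a0) => [->|Hza]; first by rewrite ?eqxx ?orbT.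
  case: (eqVneq z y) => [->|Hzy]; first by rewrite ?eqxx Hyb ?orbT.
  have := F a0 y z Ha0 Hy Hz (ne _ _ Hya) (ne _ _ Hza) (ne _ _ Hzy).
  by rewrite (negbTE HyS) /= => ->; rewrite !orbT.
have [w [Hw Hwy HwS]] := Hout y Hy.
have [c [Hc Hcw Hcy Hyc]] : exists c, [/\ c \in Q, c != w, c != y & y \notin S c].
  case: (eqVneq w a0) => Hwa.
    by subst w; exists b; split.
  by exists a0; split => //; apply: ne.
have HcS : c \in S y.
  have := F y w c Hy Hw Hc (ne _ _ Hwy) (ne _ _ Hcy) (ne _ _ Hcw).
  by rewrite (negbTE HwS).
exists y, c; rewrite HcS /=.
apply/subsetP => z Hz; rewrite !inE.
case: (eqVneq z y) => [->|Hzy]; first by rewrite ?eqxx ?orbT.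
case: (eqVneq z w) => [->|Hzw].
  have := F c y w Hc Hy Hw Hcy Hcw (ne _ _ Hwy).
  by rewrite (negbTE Hyc) /= => ->; rewrite !orbT.
have := F y w z Hy Hw Hz (ne _ _ Hwy) (ne _ _ Hzy) (ne _ _ Hzw).
by rewrite (negbTE HwS) /= => ->; rewrite !orbT.
Qed.


Lemma card_bigcup_le (I T : finType) (P : pred I) (F : I -> {set T}) :
  #|\bigcup_(i | P i) F i| <= \sum_(i | P i) #|F i|.
Proof.
elim/big_rec2: _ => [|i X n Pi IH]; first by rewrite cards0.
by apply: leq_trans (leq_card_setU _ _) _; rewrite leq_add2l.
Qed.

Theorem proposition3 :
  forall t r : nat, 1 <= t -> 3 <= r ->
  exists C N : nat, forall n : nat, N <= n ->
    forall (T : finType) (e : rel T),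
      #|T| = n -> simple_graph e -> ~ contains_fan e t ->
      num_Kr e r <= C * n.
Proof.
move=> t r Ht Hr.
exists ((t.-1).*2 * 2 ^ (4 * t)), 0 => n _ T e HT Hg Hf.
rewrite -HT.
pose S := Sf e t.
have HS : forall a, goodS e t a (S a) by move=> a; apply: Sf_good.
pose U a b := [set a; b] :|: S a :|: S b.
have HK : [set Q : {set T} | (#|Q| == r) && is_clique e Q] \subset
          \bigcup_(a : T) \bigcup_(b in S a) powerset (U a b).
  apply/subsetP => Q; rewrite inE => /andP [/eqP HQ Hcl].
  have [a [b /andP [Hb Hsub]]] : exists a b, (b \in S a) && (Q \subset U a b).
    apply: combin; first by lia.
    move=> a y z Ha Hy Hz Hay Haz Hyz.
    move: Hcl; rewrite /is_clique => /forall_inP Hcl.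
    have E : forall u v, u \in Q -> v \in Q -> u != v -> e u v.
      by move=> u v Hu Hv Huv; have /forall_inP := Hcl u Hu; move/(_ v Hv); rewrite Huv.
    have /andP [_ /forallP Hc] := HS a.
    have /forallP := Hc y; move/(_ z); rewrite !E //.
  apply/bigcupP; exists a => //; apply/bigcupP; exists b => //.
  by rewrite powersetE.
rewrite /num_Kr; apply: leq_trans (subset_leq_card HK) _.
apply: leq_trans (card_bigcup_le _ _) _.
rewrite mulnC -sum_nat_const.
apply: leq_sum => a _.
apply: leq_trans (card_bigcup_le _ _) _.
apply: (@leq_trans (\sum_(b in S a) 2 ^ (4 * t))).
  apply: leq_sum => b _; rewrite card_powerset; apply: leq_pexp2l => //.
  have /andP [Ha _] := HS a; have /andP [Hb _] := HS b.
  rewrite /U.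
  have H1 : #|[set a; b] :|: S a :|: S b| <= #|[set a; b] :|: S a| + #|S b| by apply: leq_card_setU.
  have H2 : #|[set a; b] :|: S a| <= #|[set a; b]| + #|S a| by apply: leq_card_setU.
  have H3 : #|[set a; b]| <= 2 by rewrite cards2; case: (a != b).
  lia.
rewrite sum_nat_const; apply: leq_mul => //.
by have /andP [Ha _] := HS a.
Qed.
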